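(* Let $C>0$ and $\delta>0$, let $f \in C((0,\infty);(0,\infty))$ be asymptotically increasing with $\lim_{x\to\infty} f(x)/x = \infty$, and let $\psi \in C([-\delta,0];(0,\infty))$. Consider \[ z'(t) = C\int_{t-\delta}^t f(z(s))\,ds, \quad t\ge 0; \qquad z(t)=\psi(t), \quad t\in[-\delta,0]. \] If a solution satisfies $z \in C([-\delta,\infty);(0,\infty))$, then $z$ exhibits superexponential growth, i.e. $z(t)\to\infty$ as $t\to\infty$ and $\lim_{t\to\infty} z(t-\epsilon)/z(t) = 0$ for every $\epsilon>0$.
   Context: ''$f$ is asymptotically increasing'' means that there is a continuous increasing function $\phi:(0,\infty)\to(0,\infty)$ with $f(x)/\phi(x)\to 1$ as $x\to\infty$. *)

(* Defs.v *)
From Stdlib Require Import Reals Lra.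
From Coquelicot Require Import Coquelicot.
Open Scope R_scope.

Definition asymptotically_increasing (f : R -> R) : Prop :=
  exists phi : R -> R,
    (forall x, 0 < x -> continuous phi x /\ 0 < phi x) /\
    (forall x y, 0 < x -> x < y -> phi x < phi y) /\
    is_lim (fun x => f x / phi x) p_infty 1.

Definition continuous_on_set (D : R -> Prop) (g : R -> R) : Prop :=
  forall t, D t -> filterlim g (within D (locally t)) (locally (g t)).

(* Main.v *)
Require Import Defs.
From Stdlib Require Import Reals Lra Classical.
From Coquelicot Require Import Coquelicot.
Open Scope R_scope.

Theorem lemma6p1 (C delta : R) (f psi z : R -> R) :
  0 < C -> 0 < delta ->
  (* f in C((0,oo);(0,oo)) *)
  (forall x, 0 < x -> continuous f x /\ 0 < f x) ->
  asymptotically_increasing f ->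
  is_lim (fun x => f x / x) p_infty p_infty ->
  (* psi in C([-delta,0];(0,oo)) *)
  continuous_on_set (fun t => - delta <= t <= 0) psi ->
  (forall t, - delta <= t <= 0 -> 0 < psi t) ->
  (* z in C([-delta,oo);(0,oo)) solves the problem *)
  continuous_on_set (fun t => - delta <= t) z ->
  (forall t, - delta <= t -> 0 < z t) ->
  (forall t, - delta <= t <= 0 -> z t = psi t) ->
  (forall t, 0 < t ->
     is_derive z t (C * RInt (fun s => f (z s)) (t - delta) t)) ->
  is_lim z p_infty p_infty /\
  (forall eps, 0 < eps -> is_lim (fun t => z (t - eps) / z t) p_infty 0).
Proof.
  intros HC Hd Hf _ Hlim _ _ _ Hz _ Hder.
  set (g := fun s => f (z s)).
  set (D := fun t => C * RInt g (t - delta) t).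
  assert (zc : forall t, 0 < t -> continuous z t).
  { intros t Ht. apply (ex_derive_continuous (K:=R_AbsRing) (V:=R_NormedModule)). eexists. apply (Hder t Ht). }
  assert (gc : forall s, 0 < s -> continuous g s).
  { intros s Hs. unfold g. apply continuous_comp. apply zc; auto.
    apply Hf. apply Hz. lra. }
  assert (gpos : forall s, - delta <= s -> 0 < g s).
  { intros s Hs. unfold g. apply Hf. apply Hz. auto. }
  assert (gint : forall a b, 0 < a -> a <= b -> ex_RInt g a b).
  { intros a b Ha Hab. apply (ex_RInt_continuous (V:=R_CompleteNormedModule)). intros s Hs.
    rewrite Rmin_left in Hs by lra. apply gc. lra. }
  assert (Dlow : forall t h m, delta < t -> 0 < h <= delta ->
            (forall s, t - h < s < t -> m <= g s) -> C * (h * m) <= D t).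
  { intros t h m Ht Hh Hm. unfold D. apply Rmult_le_compat_l. lra.
    rewrite <- (RInt_Chasles g (t - delta) (t - h) t) by (apply gint; lra).
    assert (H1 : 0 <= RInt g (t - delta) (t - h)).
    { apply RInt_ge_0. lra. apply gint; lra. intros s Hs. left. apply gpos. lra. }
    assert (H2 : RInt (fun _ => m) (t - h) t <= RInt g (t - h) t).
    { apply RInt_le. lra. apply ex_RInt_const. apply gint; lra. auto. }
    rewrite RInt_const in H2. unfold scal in H2. simpl in H2. unfold mult in H2. simpl in H2.
    unfold plus. simpl. replace (t - (t - h)) with h in H2 by ring. lra. }
  assert (mvt : forall x y, delta < x -> x <= y ->
            exists c, x <= c <= y /\ z y - z x = D c * (y - x)).
  { intros x y Hx Hxy.
    destruct (MVT_gen z x y D) as [c [Hc Heq]].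
    - intros c Hc. rewrite Rmin_left, Rmax_right in Hc by lra. apply Hder. lra.
    - intros c Hc. rewrite Rmin_left, Rmax_right in Hc by lra.
      apply continuity_pt_filterlim. apply zc. lra.
    - rewrite Rmin_left, Rmax_right in Hc by lra. exists c. split; auto. }
  assert (mono : forall x y, delta < x -> x <= y -> z x <= z y).
  { intros x y Hx Hxy. destruct (mvt x y Hx Hxy) as [c [Hc Heq]].
    assert (0 <= D c).
    { replace 0 with (C * (delta * 0)) by ring. apply Dlow. lra. lra.
      intros s Hs. left. apply gpos. lra. }
    assert (0 <= D c * (y - x)) by (apply Rmult_le_pos; lra). lra. }
  assert (unb : forall M, exists T, forall t, T < t -> M < z t).
  { intros M. destruct (classic (exists T, forall t, T < t -> M < z t)) as [H|H]; auto.
    exfalso.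
    assert (bound : forall t, 2 * delta < t -> z t <= M).
    { intros t Ht. destruct (Rle_dec (z t) M) as [|Hn]; auto. exfalso. apply H.
      exists t. intros t' Ht'. assert (z t <= z t') by (apply mono; lra). lra. }
    set (T1 := 3 * delta).
    set (a := z T1).
    assert (Ha : 0 < a) by (apply Hz; unfold T1; lra).
    assert (HaM : a <= M) by (apply bound; unfold T1; lra).
    destruct (continuity_ab_min f a M HaM) as [mx [Hmin Hmx]].
    { intros c Hc. apply continuity_pt_filterlim. apply Hf. lra. }
    set (m := f mx).
    assert (Hm : 0 < m) by (apply Hf; lra).
    set (k := C * (delta * m)).
    assert (Hk : 0 < k) by (unfold k; repeat apply Rmult_lt_0_compat; lra).
    set (t := T1 + delta + M / k + 1).
    assert (HMk : 0 <= M / k). { apply Rdiv_le_0_compat; lra. }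
    destruct (mvt (T1 + delta) t) as [c [Hc Heq]]; [unfold T1; lra | unfold t; lra |].
    assert (HD : k <= D c).
    { apply Dlow. unfold T1 in *; lra. lra. intros s Hs. unfold g. apply Hmin.
      split. unfold a. apply mono; unfold T1 in *; lra. apply bound. unfold T1 in *; lra. }
    assert (Hz1 : 0 < z (T1 + delta)) by (apply Hz; unfold T1; lra).
    assert (Hbt : z t <= M) by (apply bound; unfold t, T1; lra).
    assert (Hkk : k * (t - (T1 + delta)) = M + k) by (unfold t; field; lra).
    assert (k * (t - (T1 + delta)) <= D c * (t - (T1 + delta))).
    { apply Rmult_le_compat_r; unfold t; lra. }
    lra. }
  split.
  { apply is_lim_spec. intros M. simpl. apply unb. }
  intros eps Heps. apply is_lim_spec. intros [eta Heta]. simpl.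
  set (h := Rmin (eps / 2) delta).
  assert (Hh1 : h <= eps / 2) by apply Rmin_l.
  assert (Hh2 : h <= delta) by apply Rmin_r.
  assert (Hh0 : 0 < h) by (apply Rmin_glb_lt; lra).
  set (K := 2 / (eta * C * h * h)).
  assert (HK : 0 < K).
  { unfold K. apply Rdiv_lt_0_compat. lra.
    repeat apply Rmult_lt_0_compat; lra. }
  apply is_lim_spec in Hlim. destruct (Hlim K) as [X HX].
  destruct (unb X) as [T2 HT2].
  exists (Rmax T2 delta + eps). intros t Ht.
  assert (Ht1 : T2 < t - eps) by (generalize (Rmax_l T2 delta); lra).
  assert (Ht2 : delta < t - eps) by (generalize (Rmax_r T2 delta); lra).
  destruct (mvt (t - h) t) as [c [Hc Heq]]; [lra | lra |].
  assert (Hze : 0 < z (t - eps)) by (apply Hz; lra).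
  assert (HD : C * (h * (K * z (t - eps))) <= D c).
  { apply Dlow. lra. lra. intros s Hs.
    assert (Hzs : 0 < z s) by (apply Hz; lra).
    assert (HXs : X < z s) by (apply HT2; lra).
    specialize (HX (z s) HXs).
    assert (Hmo : z (t - eps) <= z s) by (apply mono; lra).
    unfold g.
    assert (K * z s < f (z s)).
    { apply (Rmult_lt_compat_r (z s)) in HX; auto.
      unfold Rdiv in HX. rewrite Rmult_assoc, Rinv_l in HX by lra. lra. }
    assert (K * z (t - eps) <= K * z s) by (apply Rmult_le_compat_l; lra).
    lra. }
  assert (Hzh : 0 < z (t - h)) by (apply Hz; lra).
  assert (Hzt : 0 < z t) by (apply Hz; lra).
  assert (Hprod : C * (h * (K * z (t - eps))) * h = 2 / eta * z (t - eps)).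
  { unfold K. field. lra. }
  assert (C * (h * (K * z (t - eps))) * h <= D c * (t - (t - h))).
  { replace (t - (t - h)) with h by ring. apply Rmult_le_compat_r; lra. }
  assert (H2 : 2 / eta * z (t - eps) < z t) by lra.
  assert (H3 : 2 * z (t - eps) < eta * z t).
  { apply (Rmult_lt_compat_l eta) in H2; auto.
    replace (eta * (2 / eta * z (t - eps))) with (2 * z (t - eps)) in H2 by (field; lra).
    lra. }
  rewrite Rminus_0_r, Rabs_pos_eq.
  - apply (Rmult_lt_reg_r (z t)); auto. unfold Rdiv.
    rewrite Rmult_assoc, Rinv_l by lra. lra.
  - apply Rlt_le, Rdiv_lt_0_compat; auto.
Qed.
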